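(* Fix $k\ge2$ and assume $\mathbb{E} Z<\infty$. Let $L_\infty=\inf_{n\in\mathbb{N}}L_n$ in the $k$-choice model. Then $L_\infty$ is finite almost surely, and consequently the sequences $(R_n)_{n\ge1}$, $(L_n)_{n\ge1}$, $(\Lambda_n)_{n\ge1}$ are almost surely bounded.
   Context: Let $Z$ be a random variable on $\mathbb{N}=\{1,2,3,\dots\}$. Fix $k\ge2$ and let $(Z^{(1)}_n)_{n\ge1},\dots,(Z^{(k)}_n)_{n\ge1}$ be $k$ independent sequences of i.i.d. random variables, all distributed as $Z$ and mutually independent. The $k$-choice model: define $T_n=\{n\}$ for $n\le0$ and $T_n=\{n\}\cup\bigcup_{i=1}^k T_{n-Z^{(i)}_n}$ for $n\ge1$. Let $\mathcal{L}_n=T_n\cap\{0,-1,-2,\dots\}$, $R_n=\max\mathcal{L}_n$, $L_n=\min\mathcal{L}_n$, $\Lambda_n=|\mathcal{L}_n|$. *)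

(* Defs.v *)
From HB Require Import structures.
From mathcomp Require Import all_boot all_order all_algebra.
From mathcomp Require Import all_classical all_reals all_analysis.
Set Implicit Arguments. Unset Strict Implicit. Unset Printing Implicit Defensive.
Import Order.TTheory GRing.Theory Num.Theory.
Local Open Scope ring_scope.
Local Open Scope classical_set_scope.

(* [zeta i m] plays the role of Z^{(i+1)}_m (i = 0..k-1).
   [Tfuel zeta k fuel n] computes T_n by the recursion
     T_n = {n}                                   for n <= 0,
     T_n = {n} ∪ ⋃_{i<k} T_{n - zeta i n}        for n >= 1,
   as a list (possibly with repetitions).  The fuel is only needed for
   structural recursion; when all zeta i m >= 1 the fuel [n] used in [T]
   below is always sufficient, so [T] is exactly the recursively defined set. *)
Fixpoint Tfuel (zeta : nat -> nat -> nat) (k fuel : nat) (n : int) : seq int :=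
  if n <= 0 then [:: n] else
  match fuel with
  | 0 => [:: n]
  | f.+1 => n :: flatten [seq Tfuel zeta k f (n - (zeta i `|n|%N)%:Z) | i <- iota 0 k]
  end.

Definition T (zeta : nat -> nat -> nat) (k n : nat) : seq int :=
  Tfuel zeta k n n%:Z.

Definition Lcal (zeta : nat -> nat -> nat) (k n : nat) : seq int :=
  undup [seq x <- T zeta k n | x <= 0].

(* R_n = max \mathcal L_n,  L_n = min \mathcal L_n, Lambda_n = |\mathcal L_n|.
   (\mathcal L_n is nonempty when all zeta >= 1; the seed [head 0 _] is an
   element of the list, so these are the true max / min.) *)
Definition Rn (zeta : nat -> nat -> nat) (k n : nat) : int :=
  let s := Lcal zeta k n in foldr Num.max (head 0 s) s.
Definition Ln (zeta : nat -> nat -> nat) (k n : nat) : int :=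
  let s := Lcal zeta k n in foldr Num.min (head 0 s) s.
Definition Lambda (zeta : nat -> nat -> nat) (k n : nat) : nat :=
  size (Lcal zeta k n).

Definition mutually_independent {d} {Omega : measurableType d} {R : realType}
  (P : probability Omega R) {I : eqType} (J : set I) (X : I -> Omega -> nat) :=
  forall (F : seq I), uniq F -> (forall j, j \in F -> J j) ->
  forall A : I -> set nat,
    P (\bigcap_(j in [set j | j \in F]) (X j @^-1` A j))
    = (\prod_(j <- F) P (X j @^-1` A j))%E.

Definition same_law {d} {Omega : measurableType d} {R : realType}
  (P : probability Omega R) (X Y : Omega -> nat) :=
  forall A : set nat, P (X @^-1` A) = P (Y @^-1` A).

(* measurability of a nat-valued map (nat carries the discrete sigma-algebra) *)
Definition nat_measurable {d} {Omega : measurableType d} (X : Omega -> nat) :=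
  forall m : nat, measurable (X @^-1` [set m]).

(* Main.v *)
Require Import Defs.
From HB Require Import structures.
From mathcomp Require Import all_boot all_order all_algebra.
From mathcomp Require Import all_classical all_reals all_analysis.
From mathcomp Require Import measurable_realfun lebesgue_measure.
From mathcomp Require Import zify.
Import Order.TTheory GRing.Theory Num.Theory.
Local Open Scope ring_scope.
Local Open Scope classical_set_scope.

Lemma Tfuel_ge (zeta : nat -> nat -> nat) k (C : nat) :
  (forall i m, (i < k)%N -> (1 <= m)%N -> (m:int) - (zeta i m : int) >= - (C:int)) ->
  forall fuel (n : int), - (C:int) <= n -> forall x, x \in Tfuel zeta k fuel n -> - (C:int) <= x.
Proof.
move=> H; elim=> [|f IH] n Hn x /=.
  by case: ifP => _; rewrite inE => /eqP ->.
case: ifP => Hn0; first by rewrite inE => /eqP ->.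
rewrite inE => /orP [/eqP -> //|].
case/flatten_mapP => i; rewrite mem_iota add0n => /andP [_ Hik].
apply: IH.
have Hpos : (0 < n) by rewrite ltNge Hn0.
have := H i `|n|%N Hik.
have -> : ((`|n|%N : nat) : int) = n by rewrite gez0_abs // ltW.
apply; lia.
Qed.

Lemma foldr_mem (op : int -> int -> int) (a : int) s :
  (forall x y, op x y = x \/ op x y = y) -> foldr op a s \in a :: s.
Proof.
move=> Hop; elim: s => [|y s IH] /=; first by rewrite inE.
case: (Hop y (foldr op a s)) => ->; first by rewrite !inE eqxx orbT.
move: IH; rewrite !inE => /orP [->//|->]; by rewrite !orbT.
Qed.

Lemma det_bound (zeta : nat -> nat -> nat) k (C : nat) :
  (forall i m, (i < k)%N -> (1 <= m)%N -> (m:int) - (zeta i m : int) >= - (C:int)) ->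
  forall n, [/\ (`|Rn zeta k n|%N <= C)%N, (`|Ln zeta k n|%N <= C)%N,
       (Lambda zeta k n <= C.+1)%N & - (C:int) <= Ln zeta k n].
Proof.
move=> H n.
have HL : forall x, x \in Lcal zeta k n -> - (C:int) <= x <= 0.
  move=> x; rewrite mem_undup mem_filter => /andP [-> Hx]; rewrite andbT.
  have Hc : - (C:int) <= n%:Z by lia.
  exact: (@Tfuel_ge zeta k C H n n%:Z Hc x Hx).
have Hin : forall x, x \in 0 :: Lcal zeta k n -> - (C:int) <= x <= 0.
  move=> x; rewrite inE => /orP [/eqP ->|/HL //]; lia.
have Hh : forall s : seq int, head 0 s \in 0 :: s.
  by case=> [|y s] /=; rewrite !inE eqxx ?orbT.
have Hsub : forall (a : int) (s : seq int), a \in 0 :: s -> {subset a :: s <= 0 :: s}.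
  move=> a s Ha x; rewrite inE => /orP [/eqP ->//|Hx]; by rewrite inE Hx orbT.
have HR : - (C:int) <= Rn zeta k n <= 0.
  apply: Hin; rewrite /Rn; apply: (Hsub _ _ (Hh _)); apply: foldr_mem.
  by move=> x y; case: leP; auto.
have HLn : - (C:int) <= Ln zeta k n <= 0.
  apply: Hin; rewrite /Ln; apply: (Hsub _ _ (Hh _)); apply: foldr_mem.
  by move=> x y; case: leP; auto.
split; [lia|lia| |lia].
rewrite /Lambda.
have -> : C.+1 = size [seq - ((j : nat) : int) | j <- iota 0 C.+1].
  by rewrite size_map size_iota.
apply: uniq_leq_size; first exact: undup_uniq.
move=> x /HL Hx; apply/mapP; exists `|x|%N; first by rewrite mem_iota; lia.
lia.
Qed.

Section prob.
Context (R : realType) (d : measure_display) (Omega : measurableType d)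
  (P : probability Omega R).

Lemma natm_pre (X : Omega -> nat) (S : set nat) :
  nat_measurable X -> measurable (X @^-1` S).
Proof.
move=> mX.
have -> : X @^-1` S = \bigcup_(j in S) (X @^-1` [set j]).
  apply/seteqP; split => w /=; first by move=> Sw; exists (X w).
  by case=> j Sj /= ->.
by apply: bigcup_measurable => j _; exact: mX.
Qed.

Lemma natm_fun (X : Omega -> nat) : nat_measurable X ->
  measurable_fun setT (fun w => ((X w)%:R : R)).
Proof.
move=> mX _ Y mY; rewrite setTI.
exact: (natm_pre X [set n : nat | Y (n%:R : R)] mX).
Qed.

Lemma indic_mfun (A : set Omega) : measurable A ->
  measurable_fun setT (EFin \o (\1_A : Omega -> R)).
Proof. by move=> mA; apply/measurable_EFinP; exact: measurable_indic. Qed.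

Lemma ind0 (A : set Omega) w : (0 <= (\1_A w : R)%:E)%E.
Proof. by rewrite lee_fin indicE ler0n. Qed.

Lemma count_le (z n : nat) : (\sum_(0 <= m < n) ((m.+1 < z)%N : nat) <= z)%N.
Proof.
suff : (\sum_(0 <= m < n) ((m.+1 < z)%N : nat) <= minn n z)%N.
  by move=> H; apply: (leq_trans H); exact: geq_minr.
elim: n => [|n IH]; first by rewrite big_geq.
rewrite big_nat_recr //=; case: ltnP => H /=; lia.
Qed.

Local Open Scope ereal_scope.

Lemma tail_sum_le (Z : Omega -> nat) : nat_measurable Z ->
  \sum_(m <oo) P (Z @^-1` [set x | (m.+1 < x)%N]) <= 'E_P[fun w => (Z w)%:R].
Proof.
move=> mZ.
have mB m : measurable (Z @^-1` [set x | (m.+1 < x)%N]) by exact: natm_pre.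
have -> : \sum_(m <oo) P (Z @^-1` [set x | (m.+1 < x)%N]) =
  \sum_(m <oo) \int[P]_w (\1_(Z @^-1` [set x | (m.+1 < x)%N]) w : R)%:E.
  apply: eq_eseriesr => m _.
  by rewrite integral_indic // setIT.
have HI : \int[P]_w \sum_(m <oo) (\1_(Z @^-1` [set x | (m.+1 < x)%N]) w : R)%:E =
  \sum_(m <oo) \int[P]_w (\1_(Z @^-1` [set x | (m.+1 < x)%N]) w : R)%:E.
  apply: integral_nneseries => //.
  by move=> n; exact: indic_mfun.
rewrite -HI expectation.unlock.
apply: ge0_le_integral => //.
- move=> w _; eapply nneseries_ge0.
  by move=> n _ _; exact: ind0.
- apply: ge0_emeasurable_sum => //.
  by move=> n _; exact: indic_mfun.
- by apply/measurable_EFinP; exact: natm_fun.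
move=> w _.
apply: lime_le; first by apply: is_cvg_nneseries => n _ _; exact: ind0.
apply: nearW => n.
have -> : \sum_(0 <= m < n) (\1_(Z @^-1` [set x | (m.+1 < x)%N]) w : R)%:E =
   ((\sum_(0 <= m < n) ((m.+1 < Z w)%N : nat))%:R : R)%:E.
  rewrite sumEFin natr_sum; congr (_%:E); apply: eq_bigr => m _.
  rewrite indicE; congr ((nat_of_bool _)%:R).
  by apply/idP/idP => [/set_mem|H] //; exact/mem_set.
by rewrite lee_fin ler_nat count_le.
Qed.
Lemma fin_eventually (u : nat -> nat) :
  (\sum_(m <oo) ((u m)%:R : R)%:E) \is a fin_num ->
  exists N0, forall m, (N0 <= m)%N -> u m = 0%N.
Proof.
move=> Hf; apply/not_existsP => Hn.
have Hinf : forall N0, exists m, (N0 <= m)%N /\ u m <> 0%N.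
  move=> N0; apply: contrapT => Hc; apply: (Hn N0) => m Hm.
  apply: contrapT => Hu; apply: Hc; exists m; split => //.
have Hj : forall j, exists n, (j <= \sum_(0 <= m < n) u m)%N.
  elim=> [|j [n Hn']]; first by exists 0%N.
  have [m [Hm Hu]] := Hinf n.
  exists m.+1; rewrite big_nat_recr //=.
  rewrite (big_cat_nat _ Hm) //=.
  have : (0 <= \sum_(n <= i < m) u i)%N by [].
  lia.
have Hle : forall n, (((\sum_(0 <= m < n) u m)%N)%:R : R)%:E <= \sum_(m <oo) ((u m)%:R : R)%:E.
  move=> n; rewrite natr_sum -sumEFin.
  by apply: nneseries_lim_ge => i _ _; rewrite lee_fin ler0n.
move: Hf Hle; set S := \sum_(m <oo) _ => Hf Hle.
have [n Hn'] := Hj (Num.trunc (fine S)).+1.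
have := Hle n; rewrite -(fineK Hf) lee_fin => H1.
have H2 := truncnS_gt (fine S).
have : ((Num.trunc (fine S)).+1%:R <= (\sum_(0 <= m < n) u m)%N%:R :> R)%R by rewrite ler_nat.
move=> H3.
have := lt_le_trans H2 (le_trans H3 H1).
by rewrite ltxx.
Qed.

Lemma ae_eventually (k : nat) (Z : Omega -> nat) (Zs : nat -> nat -> Omega -> nat) :
  nat_measurable Z ->
  (forall i n, (i < k)%N -> (1 <= n)%N -> nat_measurable (Zs i n)) ->
  (forall i n, (i < k)%N -> (1 <= n)%N -> same_law P (Zs i n) Z) ->
  ('E_P[fun w => (Z w)%:R] < +oo)%E ->
  {ae P, forall w, exists N0, forall m, (N0 <= m)%N -> forall i, (i < k)%N ->
     (Zs i m.+1 w <= m.+1)%N}.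
Proof.
move=> mZ mZs law EZ.
pose A (i m : nat) := Zs i m.+1 @^-1` [set x | (m.+1 < x)%N].
pose B m := Z @^-1` [set x | (m.+1 < x)%N].
have mA : forall (i : 'I_k) m, measurable (A i m).
  by move=> i m; apply: natm_pre; exact: mZs.
pose h m w := \sum_(i < k) (\1_(A i m) w : R)%:E.
pose g w := \sum_(m <oo) h m w.
have h0 m w : 0 <= h m w by apply: sume_ge0 => i _; exact: ind0.
have mh m : measurable_fun setT (h m).
  by apply: emeasurable_sum => i; exact: indic_mfun.
have mg : measurable_fun setT g.
  by apply: ge0_emeasurable_sum => // n _; exact: mh.
have Ih m : \int[P]_w h m w = \sum_(i < k) P (B m).
  rewrite ge0_integral_sum //; last by move=> i; exact: indic_mfun.
  apply: eq_bigr => i _; rewrite integral_indic // setIT.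
  exact: (law i m.+1 (ltn_ord i) (ltn0Sn m)).
have Ig : \int[P]_w g w = \sum_(i < k) \sum_(m <oo) P (B m).
  have -> : \int[P]_w g w = \sum_(m <oo) \int[P]_w h m w.
    by apply: integral_nneseries.
  rewrite (eq_eseriesr (fun m _ => Ih m)).
  by apply: nneseries_sum => i j _; exact: measure_ge0.
have Sfin : \sum_(m <oo) P (B m) < +oo := le_lt_trans (tail_sum_le Z mZ) EZ.
have gint : P.-integrable setT g.
  apply/integrableP; split => //.
  have -> : \int[P]_w `|g w| = \int[P]_w g w.
    apply: eq_integral => w _; rewrite gee0_abs //.
    by apply: nneseries_ge0 => n _ _; exact: h0.
  by rewrite Ig; apply: lte_sum_pinfty.
apply: filterS (integrable_ae measurableT gint) => w /(_ I) gfin.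
pose u m := (\sum_(i < k) (m.+1 < Zs i m.+1 w)%N)%N.
have [N0 HN] : exists N0, forall m, (N0 <= m)%N -> u m = 0%N.
  apply: fin_eventually; move: gfin.
  have -> : g w = \sum_(m <oo) ((u m)%:R : R)%:E.
    apply: eq_eseriesr => m _.
    rewrite /h /u natr_sum sumEFin; congr (_%:E); apply: eq_bigr => i _.
    rewrite indicE; congr ((nat_of_bool _)%:R).
    by apply/idP/idP => [/set_mem|H] //; exact/mem_set.
  by [].
exists N0 => m Hm i Hi; have := HN m Hm.
rewrite /u (bigD1 (Ordinal Hi)) //= => /eqP; rewrite addn_eq0 => /andP [H _].
by rewrite leqNgt; move: H; case: ltnP.
Qed.
End prob.


Theorem mainTheorem14 (R : realType) (d : measure_display) (Omega : measurableType d)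
  (P : probability Omega R) (k : nat) (Z : Omega -> nat)
  (Zs : nat -> nat -> Omega -> nat) :
  (2 <= k)%N ->
  (* Z is a random variable with values in N = {1,2,3,...} *)
  nat_measurable Z -> (forall w, (1 <= Z w)%N) ->
  (* Z^{(i)}_n, i < k, n >= 1: random variables with values in N ... *)
  (forall i n, (i < k)%N -> (1 <= n)%N -> nat_measurable (Zs i n)) ->
  (forall i n w, (i < k)%N -> (1 <= n)%N -> (1 <= Zs i n w)%N) ->
  (* ... all distributed as Z ... *)
  (forall i n, (i < k)%N -> (1 <= n)%N -> same_law P (Zs i n) Z) ->
  (* ... and all mutually independent *)
  mutually_independent P [set ij : nat * nat | (ij.1 < k)%N /\ (1 <= ij.2)%N]
    (fun ij => Zs ij.1 ij.2) ->
  (* E Z < oo *)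
  ('E_P[fun w => (Z w)%:R] < +oo)%E ->
  {ae P, forall w,
     (* L_oo = inf_n L_n is finite, i.e. > -oo *)
     (exists M : int, forall n, (1 <= n)%N -> M <= Ln (fun i m => Zs i m w) k n)
     (* (R_n), (L_n), (Lambda_n) are bounded *)
     /\ (exists B : nat, forall n, (1 <= n)%N ->
           [/\ `|Rn (fun i m => Zs i m w) k n|%N <= B,
               `|Ln (fun i m => Zs i m w) k n|%N <= B
             & Lambda (fun i m => Zs i m w) k n <= B]%N)}.
Proof.
move=> hk mZ Z1 mZs Zs1 law indep EZ.
apply: filterS (@ae_eventually _ _ _ P k Z Zs mZ mZs law EZ) => w [N0 HN].
pose C := (\sum_(m < N0.+1) \sum_(i < k) Zs i m w)%N.
have HC : forall i m, (i < k)%N -> (1 <= m)%N ->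
    (m:int) - ((fun i m => Zs i m w) i m : int) >= - (C:int).
  move=> i m Hi Hm /=.
  case: (ltnP N0 m) => HmN.
    have Hle : (Zs i m w <= m)%N.
      by case: m Hm HmN => // m' _ HmN; apply: HN.
    lia.
  have Hle : (Zs i m w <= C)%N.
    have Hm' : (m < N0.+1)%N by [].
    rewrite /C (bigD1 (Ordinal Hm')) //= (bigD1 (Ordinal Hi)) //=.
    by rewrite -addnA leq_addr.
  lia.
split.
  exists (- (C:int)) => n _; by case: (@det_bound (fun i m => Zs i m w) k C HC n).
exists C.+1 => n _; case: (@det_bound (fun i m => Zs i m w) k C HC n) => H1 H2 H3 _.
split => //; exact: leqW.
Qed.
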